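(* Let $P$ be a Sylow $p$-subgroup and $Q$ a Sylow $q$-subgroup of a finite group $G$, where $p\neq q$ are primes. (1) If $a\ge 1$ is an integer with $|P:C_P(Q)|\ge p^a$, then $\Pr(P,Q)\le \frac{p^a+q-1}{p^aq}$. (2) If $[P,Q]\neq 1$, then $\Pr(P,Q)\le\frac{p+q-1}{pq}$.
   Context: For subsets $X,Y$ of a finite group, $\Pr(X,Y)=|\{(x,y)\in X\times Y: xy=yx\}|/(|X||Y|)$. $C_P(Q)$ is the centralizer of $Q$ in $P$. *)

(* Defs.v *)
From mathcomp Require Import all_boot all_order all_algebra all_fingroup all_solvable.
Set Implicit Arguments. Unset Strict Implicit. Unset Printing Implicit Defensive.
Import GRing.Theory Num.Theory.
Local Open Scope group_scope.

Definition comm_prob (gT : finGroupType) (X Y : {set gT}) : rat :=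
  (#|[set xy in setX X Y | ((xy.1 * xy.2)%g == (xy.2 * xy.1)%g)]|%:R
    / (#|X| * #|Y|)%:R)%R.

(* Main.v *)
Require Import Defs.
From mathcomp Require Import all_boot all_order all_algebra all_fingroup all_solvable.
From mathcomp Require Import zify.
Import GRing.Theory Num.Theory.
Local Open Scope group_scope.

Lemma index_ge_prime (gT : finGroupType) (H K : {group gT}) (r : nat) :
  r.-group H -> K \subset H -> K != H -> r <= #|H : K|.
Proof.
move=> rH sKH neKH.
have rI : r.-nat #|H : K| by apply: pnat_dvd rH; apply: dvdn_indexg.
case: (p_natP rI) => k Ek.
case: k Ek => [|k] Ek.
  by move: neKH; rewrite (group_inj (index1g sKH Ek)) eqxx.
rewrite Ek expnS.
have := cardG_gt0 H; rewrite -(Lagrange sKH) Ek expnS.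
case: r rH rI Ek => [|r] //= _ _ _ Hp.
by rewrite leq_pmulr //; move: Hp; rewrite muln_gt0 => /andP[_]; rewrite muln_gt0 => /andP[].
Qed.

Lemma count_pairs (gT : finGroupType) (P Q : {set gT}) :
  #|[set xy in setX P Q | ((xy.1 * xy.2)%g == (xy.2 * xy.1)%g)]|
  = \sum_(x in P) #|Q :&: 'C[x]|.
Proof.
rewrite -sum1_card.
rewrite (eq_bigl (fun u : gT * gT => (u.1 \in P) && (u.2 \in Q :&: 'C[u.1]))); last first.
  move=> [x y] /=; rewrite inE /= in_setX in_setI cent1E.
  by case: (x \in P); case: (y \in Q) => //=; rewrite eq_sym.
under [RHS]eq_bigr do rewrite -sum1_card.
by rewrite pair_big_dep.
Qed.

Lemma term_bound (gT : finGroupType) (Q : {group gT}) (q : nat) (x : gT) :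
  prime q -> q.-group Q ->
  q * #|'C_Q[x]| <= #|Q| + (q - 1) * #|Q| * (x \in 'C(Q)).
Proof.
move=> pq qQ.
have q1 := prime_gt0 pq.
have sCQ : 'C_Q[x] \subset Q by apply: subsetIl.
case xC: (x \in 'C(Q)).
  have := subset_leq_card sCQ; rewrite /= muln1 => h; nia.
rewrite muln0 addn0.
have ne : 'C_Q[x] != Q.
  apply/negP => /eqP E.
  move: xC; rewrite -sub_cent1 => /negbT/negP; apply.
  by rewrite -E subsetIr.
have := @index_ge_prime _ Q [group of 'C_Q[x]] q qQ sCQ ne.
rewrite -(Lagrange sCQ) mulnC => H.
exact: leq_mul.
Qed.

Lemma part1 (gT : finGroupType) (P Q : {group gT}) (q m : nat) :
  prime q -> q.-group Q -> 1 <= m -> m <= #|P : 'C_P(Q)| ->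
  (comm_prob P Q <= ((m + q - 1)%:R / (m * q)%:R : rat))%R.
Proof.
move=> pq qQ m1 mI.
have q1 := prime_gt0 pq.
set N := #|[set xy in setX P Q | ((xy.1 * xy.2)%g == (xy.2 * xy.1)%g)]|.
have EN : N = \sum_(x in P) #|Q :&: 'C[x]| by rewrite /N count_pairs.
have HN : q * N <= #|P| * #|Q| + (q - 1) * #|Q| * #|'C_P(Q)|.
  rewrite EN big_distrr /=.
  have LS : \sum_(i in P) q * #|'C_Q[i]| <= \sum_(i in P) (#|Q| + (q-1)*#|Q|*(i \in 'C(Q))).
    by apply: leq_sum => i _; exact: term_bound.
  apply: (leq_trans LS).
  rewrite big_split /= sum_nat_const.
  rewrite -big_distrr /= mulnC leq_add2l leq_mul2l; apply/orP; right.
  rewrite -sum1_card [X in _ <= X]big_mkcond /=.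
  rewrite [X in _ <= X](eq_bigr (fun i => ((i \in P) * (i \in 'C(Q)))%N)); last first.
    by move=> i _; rewrite inE; case: (i \in P); case: (i \in 'C(Q)).
  by rewrite big_mkcond; apply: leq_sum => i _; case: (i \in P); rewrite ?mul1n ?mul0n.
have HC : m * #|'C_P(Q)| <= #|P|.
  by rewrite -(Lagrange (subsetIl P 'C(Q))) [X in _ <= X]mulnC leq_mul.
have key : N * (m * q) <= (m + q - 1) * (#|P| * #|Q|).
  have qq : q = (q - 1) + 1 by rewrite subnK.
  rewrite addnC -addnBA // mulnDl.
  have : m * (q * N) <= m * (#|P| * #|Q| + (q - 1) * #|Q| * #|'C_P(Q)|) by rewrite leq_mul2l HN orbT.
  have : (q - 1) * #|Q| * (m * #|'C_P(Q)|) <= (q - 1) * #|Q| * #|P| by rewrite leq_mul2l HC orbT.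
  nia.
rewrite /comm_prob -/N.
have P0 := cardG_gt0 P; have Q0 := cardG_gt0 Q.
rewrite ler_pdivrMr ?ltr0n ?muln_gt0 ?P0 ?Q0 // mulrAC ler_pdivlMr ?ltr0n ?muln_gt0 ?q1 ?andbT //.
by rewrite -!natrM ler_nat.
Qed.

Theorem lemma2p6 (gT : finGroupType) (G P Q : {group gT}) (p q : nat) :
  prime p -> prime q -> p != q ->
  P \in 'Syl_p(G) -> Q \in 'Syl_q(G) ->
  (forall a : nat, 1 <= a -> p ^ a <= #|P : 'C_P(Q)|%g ->
     (comm_prob P Q <= ((p ^ a + q - 1)%:R / (p ^ a * q)%:R : rat))%R) /\
  (([~: P, Q] != 1)%g ->
     (comm_prob P Q <= ((p + q - 1)%:R / (p * q)%:R : rat))%R).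
Proof.
move=> pp pq _ SP SQ.
have pP : p.-group P by move: SP; rewrite inE => /pHall_pgroup.
have qQ : q.-group Q by move: SQ; rewrite inE => /pHall_pgroup.
split.
  move=> a a1 Ha; apply: (@part1 _ P Q q) => //.
  by rewrite expn_gt0 prime_gt0.
move=> nc; apply: (@part1 _ P Q q) => //; first exact: prime_gt0.
apply: (@index_ge_prime _ P 'C_P(Q)%G p pP (subsetIl _ _)).
apply/negP => /eqP E; move: nc; rewrite -E.
by move/commG1P: (subsetIr P 'C(Q)) => ->; rewrite eqxx.
Qed.
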